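(* Let $(X,p)$ and $(Y,d)$ be complete separable metric spaces and let $F: X \Rightarrow Y$ be a multi-valued function whose graph is an analytic subset of $X \times Y$. Then the set of points of continuity of $F$ is an analytic subset of $X$.
   Context: A multi-valued function $F: X \Rightarrow Y$ assigns to each $x$ a nonempty set $F(x)\subseteq Y$; its graph is $\{(x,y): y\in F(x)\}$. $F$ is continuous at $x$ if there is some $y \in F(x)$ such that for every $\varepsilon>0$ there is $\delta>0$ such that for every $x' \in B_p(x,\delta)$ there is $y' \in F(x')$ with $d(y,y')<\varepsilon$. A subset of a complete separable metric space is analytic if it is a continuous image of a closed subset of a complete separable metric space. *)

(* Defs.v *)
From Stdlib Require Import Reals.
Open Scope R_scope.

Definition is_metric {X : Type} (d : X -> X -> R) : Prop :=
  (forall x y, 0 <= d x y) /\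
  (forall x y, d x y = 0 <-> x = y) /\
  (forall x y, d x y = d y x) /\
  (forall x y z, d x z <= d x y + d y z).

Definition cauchy_seq {X : Type} (d : X -> X -> R) (u : nat -> X) : Prop :=
  forall eps, 0 < eps -> exists N : nat,
    forall m n, (N <= m)%nat -> (N <= n)%nat -> d (u m) (u n) < eps.

Definition seq_converges_to {X : Type} (d : X -> X -> R) (u : nat -> X) (l : X) : Prop :=
  forall eps, 0 < eps -> exists N : nat, forall n, (N <= n)%nat -> d (u n) l < eps.

Definition complete_metric {X : Type} (d : X -> X -> R) : Prop :=
  forall u : nat -> X, cauchy_seq d u -> exists l, seq_converges_to d u l.

Definition separable_metric {X : Type} (d : X -> X -> R) : Prop :=
  exists D : X -> Prop,
    (exists f : X -> nat, forall x y, D x -> D y -> f x = f y -> x = y) /\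
    (forall x eps, 0 < eps -> exists y, D y /\ d x y < eps).

Definition polish_metric {X : Type} (d : X -> X -> R) : Prop :=
  is_metric d /\ complete_metric d /\ separable_metric d.

Definition closed_in {X : Type} (d : X -> X -> R) (C : X -> Prop) : Prop :=
  forall x, (forall eps, 0 < eps -> exists y, C y /\ d x y < eps) -> C x.

Definition continuous_on_set {Z X : Type} (dZ : Z -> Z -> R) (dX : X -> X -> R)
  (C : Z -> Prop) (f : Z -> X) : Prop :=
  forall z, C z -> forall eps, 0 < eps -> exists delta, 0 < delta /\
    forall z', C z' -> dZ z z' < delta -> dX (f z) (f z') < eps.

Definition analytic {X : Type} (dX : X -> X -> R) (A : X -> Prop) : Prop :=
  exists (Z : Type) (dZ : Z -> Z -> R) (C : Z -> Prop) (f : Z -> X),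
    polish_metric dZ /\ closed_in dZ C /\ continuous_on_set dZ dX C f /\
    (forall x, A x <-> exists z, C z /\ f z = x).

Definition prod_dist {X Y : Type} (p : X -> X -> R) (d : Y -> Y -> R)
  (a b : X * Y) : R := Rmax (p (fst a) (fst b)) (d (snd a) (snd b)).

(* multi-valued function F : X => Y is encoded as a relation: y \in F(x) iff F x y *)
Definition mv_nonempty {X Y : Type} (F : X -> Y -> Prop) : Prop :=
  forall x, exists y, F x y.

Definition mv_graph {X Y : Type} (F : X -> Y -> Prop) (a : X * Y) : Prop :=
  F (fst a) (snd a).

Definition mv_continuous_at {X Y : Type} (p : X -> X -> R) (d : Y -> Y -> R)
  (F : X -> Y -> Prop) (x : X) : Prop :=
  exists y, F x y /\
    forall eps, 0 < eps -> exists delta, 0 < delta /\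
      forall x', p x x' < delta -> exists y', F x' y' /\ d y y' < eps.

(* Main.v *)
Require Import Defs.
From Stdlib Require Import Reals Lra Lia List Cantor Classical ClassicalEpsilon FunctionalExtensionality.
Open Scope R_scope.

Definition T := (nat * nat)%type.

Definition Eset (a b : nat -> T) (r : R) : Prop :=
  r = 0 \/ exists n, a n <> b n /\ r = (1/2)^n.

Lemma hp_pos n : 0 < (1/2)^n.
Proof. apply pow_lt; lra. Qed.

Lemma hp_anti n m : (n <= m)%nat -> (1/2)^m <= (1/2)^n.
Proof.
  induction m; intros H.
  - replace n with 0%nat by lia. lra.
  - destruct (Nat.eq_dec n (S m)) as [->|Hn]; [lra|].
    simpl. pose proof (IHm ltac:(lia)). pose proof (hp_pos m). lra.
Qed.

Lemma hp_le1 n : (1/2)^n <= 1.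
Proof. apply (hp_anti 0 n). lia. Qed.

Lemma hp_S n : (1/2)^(S n) < (1/2)^n.
Proof. simpl. pose proof (hp_pos n). lra. Qed.

Lemma Eset_bound a b : bound (Eset a b).
Proof. exists 1. intros r [->|[n [_ ->]]]; [lra| apply hp_le1]. Qed.

Lemma Eset_inh a b : exists r, Eset a b r.
Proof. exists 0. now left. Qed.

Definition dB (a b : nat -> T) : R :=
  proj1_sig (completeness (Eset a b) (Eset_bound a b) (Eset_inh a b)).

Lemma dB_lub a b : is_lub (Eset a b) (dB a b).
Proof. unfold dB. destruct completeness; auto. Qed.

Lemma dB_ge0 a b : 0 <= dB a b.
Proof. destruct (dB_lub a b) as [H _]. apply H. now left. Qed.

Lemma dB_diff a b n : a n <> b n -> (1/2)^n <= dB a b.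
Proof. intros Hn. destruct (dB_lub a b) as [H _]. apply H. right. eauto. Qed.

Lemma dB_upper a b r : 0 <= r -> (forall n, a n <> b n -> (1/2)^n <= r) -> dB a b <= r.
Proof.
  intros H0 H. destruct (dB_lub a b) as [_ H1]. apply H1.
  intros x [->|[n [Hn ->]]]; auto.
Qed.

Lemma dB_agree a b N : (forall k, (k <= N)%nat -> a k = b k) -> dB a b <= (1/2)^(S N).
Proof.
  intros H. apply dB_upper. left; apply hp_pos.
  intros n Hn. destruct (Compare_dec.le_lt_dec n N) as [h|h].
  - exfalso; auto.
  - apply hp_anti; lia.
Qed.

Lemma dB_small a b N : dB a b < (1/2)^N -> forall k, (k <= N)%nat -> a k = b k.
Proof.
  intros H k Hk. destruct (classic (a k = b k)) as [|Hn]; auto.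
  pose proof (dB_diff _ _ _ Hn). pose proof (hp_anti _ _ Hk). lra.
Qed.

Lemma dB_sym a b : dB a b = dB b a.
Proof.
  apply Rle_antisym; apply dB_upper; try apply dB_ge0;
  intros n Hn; apply dB_diff; auto.
Qed.

Lemma dB_metric : is_metric dB.
Proof.
  split; [|split; [|split]].
  - apply dB_ge0.
  - intros x y; split.
    + intros H. apply functional_extensionality. intros n.
      destruct (classic (x n = y n)) as [|Hn]; auto.
      pose proof (dB_diff _ _ _ Hn). pose proof (hp_pos n). lra.
    + intros ->. apply Rle_antisym; [|apply dB_ge0].
      apply dB_upper; [lra|]. intros n Hn; now exfalso.
  - apply dB_sym.
  - intros x y z. apply dB_upper.
    + pose proof (dB_ge0 x y); pose proof (dB_ge0 y z); lra.
    + intros n Hn. destruct (classic (x n = y n)) as [E|E].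
      * assert (y n <> z n) by congruence.
        pose proof (dB_diff _ _ _ H). pose proof (dB_ge0 x y); lra.
      * pose proof (dB_diff _ _ _ E). pose proof (dB_ge0 y z); lra.
Qed.

Lemma hp_small eps : 0 < eps -> exists K, (1/2)^K < eps.
Proof.
  intros H. destruct (pow_lt_1_zero (1/2) ltac:(rewrite Rabs_pos_eq; lra) eps H) as [N HN].
  exists N. specialize (HN N (le_n _)). rewrite Rabs_pos_eq in HN; auto.
  left; apply hp_pos.
Qed.

Lemma dB_complete : complete_metric dB.
Proof.
  intros u Hu.
  assert (HN : forall k, exists N, forall m n, (N <= m)%nat -> (N <= n)%nat -> dB (u m) (u n) < (1/2)^k).
  { intros k. apply Hu, hp_pos. }
  set (Nk := fun k => proj1_sig (constructive_indefinite_description _ (HN k))).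
  assert (HNk : forall k m n, (Nk k <= m)%nat -> (Nk k <= n)%nat -> dB (u m) (u n) < (1/2)^k).
  { intros k. unfold Nk. destruct constructive_indefinite_description; auto. }
  exists (fun k => u (Nk k) k).
  intros eps Heps. destruct (hp_small eps Heps) as [K HK].
  exists (Nk K). intros n Hn.
  eapply Rle_lt_trans; [apply dB_agree with (N := K)|].
  - intros k Hk. set (M := Nat.max (Nk K) (Nk k)).
    transitivity (u M k).
    + apply (dB_small _ _ K); auto. apply HNk; unfold M; lia.
    + apply (dB_small _ _ k); auto. apply HNk; unfold M; lia.
  - pose proof (hp_S K). lra.
Qed.

Fixpoint encode (l : list T) : nat :=
  match l with nil => 0%nat | x :: l' => S (Cantor.to_nat (Cantor.to_nat x, encode l')) end.

Lemma encode_inj l l' : encode l = encode l' -> l = l'.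
Proof.
  revert l'; induction l as [|x l IH]; intros [|y l'] H; cbn [encode] in H; try lia; auto.
  apply eq_add_S, Cantor.to_nat_inj in H. injection H as H1 H2.
  apply Cantor.to_nat_inj in H1. subst. f_equal; auto.
Qed.

Definition fromList (l : list T) : nat -> T := fun n => nth n l (0%nat,0%nat).

Definition DB (a : nat -> T) : Prop := exists l, a = fromList l.

Definition fB (a : nat -> T) : nat :=
  match excluded_middle_informative (DB a) with
  | left H => encode (proj1_sig (constructive_indefinite_description _ H))
  | right _ => 0%nat end.

Lemma dB_separable : separable_metric dB.
Proof.
  exists DB. split.
  - exists fB. intros x y Hx Hy. unfold fB.
    destruct excluded_middle_informative as [H1|]; [|contradiction].
    destruct excluded_middle_informative as [H2|]; [|contradiction].
    destruct constructive_indefinite_description as [l1 E1].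
    destruct constructive_indefinite_description as [l2 E2]. simpl.
    intros E. apply encode_inj in E. congruence.
  - intros x eps Heps. destruct (hp_small eps Heps) as [K HK].
    exists (fromList (map x (seq 0 (S K)))). split; [eexists; eauto|].
    eapply Rle_lt_trans; [apply dB_agree with (N := K)|].
    + intros k Hk. unfold fromList.
      rewrite nth_indep with (d' := x 0%nat) by (rewrite length_map, length_seq; lia).
      rewrite map_nth, seq_nth by lia. reflexivity.
    + pose proof (hp_S K). lra.
Qed.

Lemma dB_polish : polish_metric dB.
Proof. split; [apply dB_metric|split; [apply dB_complete|apply dB_separable]]. Qed.

Definition pdist {A B : Type} (dA : A -> A -> R) (dB : B -> B -> R) (a b : A * B) : R :=
  Rmax (dA (fst a) (fst b)) (dB (snd a) (snd b)).

Lemma pdist_polish {A B : Type} (dA : A -> A -> R) (dB : B -> B -> R) :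
  polish_metric dA -> polish_metric dB -> polish_metric (pdist dA dB).
Proof.
  intros [[A1 [A2 [A3 A4]]] [Ac [DA [[fA HfA] HDA]]]]
         [[B1 [B2 [B3 B4]]] [Bc [DB' [[fB' HfB] HDB]]]].
  unfold pdist. split; [split; [|split; [|split]]|split].
  - intros; apply (Rle_trans _ _ _ (A1 (fst x) (fst y))), Rmax_l.
  - intros [x1 x2] [y1 y2]; simpl; split.
    + intros H. pose proof (A1 x1 y1). pose proof (B1 x2 y2).
      pose proof (Rmax_l (dA x1 y1) (dB x2 y2)). pose proof (Rmax_r (dA x1 y1) (dB x2 y2)).
      assert (dA x1 y1 = 0) by lra. assert (dB x2 y2 = 0) by lra.
      apply A2 in H4. apply B2 in H5. congruence.
    + intros E; injection E as -> ->. rewrite (proj2 (A2 y1 y1) eq_refl), (proj2 (B2 y2 y2) eq_refl).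
      apply Rmax_left; lra.
  - intros; rewrite A3, B3; auto.
  - intros x y z. apply Rmax_lub.
    + eapply Rle_trans; [apply A4|]. apply Rplus_le_compat; apply Rmax_l.
    + eapply Rle_trans; [apply B4|]. apply Rplus_le_compat; apply Rmax_r.
  - intros u Hu.
    destruct (Ac (fun n => fst (u n))) as [l1 Hl1].
    { intros e He. destruct (Hu e He) as [N HN]. exists N. intros m n Hm Hn.
      eapply Rle_lt_trans; [apply Rmax_l|apply HN; auto]. }
    destruct (Bc (fun n => snd (u n))) as [l2 Hl2].
    { intros e He. destruct (Hu e He) as [N HN]. exists N. intros m n Hm Hn.
      eapply Rle_lt_trans; [apply Rmax_r|apply HN; auto]. }
    exists (l1, l2). intros e He.
    destruct (Hl1 e He) as [N1 H1]. destruct (Hl2 e He) as [N2 H2].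
    exists (Nat.max N1 N2). intros n Hn. apply Rmax_lub_lt; simpl.
    + apply H1; lia.
    + apply H2; lia.
  - exists (fun a => DA (fst a) /\ DB' (snd a)). split.
    + exists (fun a => Cantor.to_nat (fA (fst a), fB' (snd a))).
      intros [x1 x2] [y1 y2] [Hx1 Hx2] [Hy1 Hy2] E. cbn [fst snd] in *.
      apply Cantor.to_nat_inj in E. injection E as E1 E2.
      rewrite (HfA _ _ Hx1 Hy1 E1), (HfB _ _ Hx2 Hy2 E2). auto.
    + intros [x1 x2] e He. destruct (HDA x1 e He) as [y1 [Hy1 Hd1]].
      destruct (HDB x2 e He) as [y2 [Hy2 Hd2]].
      exists (y1, y2); simpl; split; auto. apply Rmax_lub_lt; auto.
Qed.

Lemma inv_S_pos n : 0 < / INR (S n).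
Proof. apply Rinv_0_lt_compat, lt_0_INR; lia. Qed.

Lemma arch_S e : 0 < e -> exists n, / INR (S n) < e.
Proof.
  intros He. destruct (archimed_cor1 e He) as [N [HN HN0]].
  destruct N as [|n]; [lia|]. eauto.
Qed.

Theorem proposition2p8 (X Y : Type) (p : X -> X -> R) (d : Y -> Y -> R)
  (F : X -> Y -> Prop) :
  polish_metric p -> polish_metric d -> mv_nonempty F ->
  analytic (prod_dist p d) (mv_graph F) ->
  analytic p (mv_continuous_at p d F).
Proof.
  intros [[P1 [P2 [P3 P4]]] _] [[D1 [D2 [D3 D4]]] [_ [DY [[fY HfY] HDY]]]] _
    [Z [dZ [C [g [HZ [HC [Hg HG]]]]]]].
  set (Cond := fun (n : nat) (x : X) (y : Y) (im : T) =>
    exists q, DY q /\ fY q = fst im /\ d y q <= / INR (S n) /\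
      forall x', p x x' < / INR (S (snd im)) -> exists y', F x' y' /\ d q y' < 2 * / INR (S n)).
  exists (Z * (nat -> T))%type, (pdist dZ dB),
    (fun a => C (fst a) /\ forall n, Cond n (fst (g (fst a))) (snd (g (fst a))) (snd a n)),
    (fun a => fst (g (fst a))).
  split; [apply pdist_polish; [exact HZ|exact dB_polish]|].
  split; [|split].
  -
    intros [z w] H. simpl.
    assert (Cz : C z).
    { apply HC. intros e He. destruct (H e He) as [[z' w'] [[Cz' _] Hd]].
      exists z'; split; auto. unfold pdist in Hd; simpl in Hd.
      eapply Rle_lt_trans; [apply Rmax_l|exact Hd]. }
    split; auto. intros n.
    assert (Happ : forall eta, 0 < eta -> exists z' w', C z' /\ Cond n (fst (g z')) (snd (g z')) (w' n)
       /\ w' n = w n /\ prod_dist p d (g z) (g z') < eta).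
    { intros eta Heta. destruct (Hg z Cz eta Heta) as [del [Hdel Hdel']].
      destruct (H (Rmin del ((1/2)^n)) ltac:(apply Rmin_pos; auto; apply hp_pos))
        as [[z' w'] [[Cz' Hw'] Hd]].
      unfold pdist in Hd; simpl in Hd.
      pose proof (Rmax_l (dZ z z') (dB w w')). pose proof (Rmax_r (dZ z z') (dB w w')).
      pose proof (Rmin_l del ((1/2)^n)). pose proof (Rmin_r del ((1/2)^n)).
      exists z', w'. split; auto. split; auto. split.
      - symmetry. apply (dB_small w w' n); [lra|lia].
      - apply Hdel'; auto. lra. }
    destruct (Happ 1 ltac:(lra)) as [z0 [w0 [_ [[q0 [Dq0 [fq0 _]]] [Ew0 _]]]]].
    assert (Hsame : forall (w' : nat -> T), w' n = w n ->
      forall q, DY q -> fY q = fst (w' n) -> q = q0).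
    { intros w' E q Dq fq. apply HfY; auto. rewrite fq, fq0, E, Ew0. auto. }
    exists q0. split; [auto|]. split; [rewrite fq0, Ew0; auto|]. split.
    + apply Rle_plus_epsilon. intros eta Heta.
      destruct (Happ eta Heta) as [z' [w' [_ [Hc [E Hd]]]]].
      destruct Hc as [q' [Dq' [fq' [Hyq' _]]]].
      assert (q' = q0) by (eapply Hsame; eauto).
      subst q'. unfold prod_dist in Hd.
      pose proof (Rmax_r (p (fst (g z)) (fst (g z'))) (d (snd (g z)) (snd (g z')))).
      pose proof (D4 (snd (g z)) (snd (g z')) q0). lra.
    + intros x' Hx'.
      destruct (Happ (/ INR (S (snd (w n))) - p (fst (g z)) x') ltac:(lra)) as [z' [w' [_ [Hc [E Hd]]]]].
      destruct Hc as [q' [Dq' [fq' [_ Hball]]]].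
      assert (q' = q0) by (eapply Hsame; eauto).
      subst q'. apply Hball. rewrite E. unfold prod_dist in Hd.
      pose proof (Rmax_l (p (fst (g z)) (fst (g z'))) (d (snd (g z)) (snd (g z')))).
      pose proof (P4 (fst (g z')) (fst (g z)) x'). rewrite (P3 (fst (g z')) (fst (g z))) in H1. lra.
  - intros [z w] [Cz _] eps Heps. destruct (Hg z Cz eps Heps) as [del [Hdel H]].
    exists del. split; auto. intros [z' w'] [Cz' _] Hd. unfold pdist in Hd; simpl in *.
    specialize (H z' Cz' (Rle_lt_trans _ _ _ (Rmax_l _ _) Hd)). unfold prod_dist in H.
    eapply Rle_lt_trans; [apply Rmax_l|exact H].
  - intros x; split.
    + intros [y [Fxy Hc]].
      destruct (proj1 (HG (x, y)) Fxy) as [z [Cz gz]].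
      assert (Hn : forall n, exists im : T, Cond n x y im).
      { intros n. destruct (Hc (/INR (S n)) (inv_S_pos n)) as [del [Hdel Hdel']].
        destruct (arch_S del Hdel) as [m Hm].
        destruct (HDY y (/INR (S n)) (inv_S_pos n)) as [q [Dq Hq]].
        exists (fY q, m). exists q. split; [exact Dq|]. split; [reflexivity|]. cbn [fst snd]. split; [lra|].
        intros x' Hx'. destruct (Hdel' x' ltac:(lra)) as [y' [Fy' Hy']].
        exists y'. split; auto. pose proof (D4 q y y'). pose proof (D3 q y). lra. }
      exists (z, fun n => proj1_sig (constructive_indefinite_description _ (Hn n))).
      simpl. rewrite gz. simpl. split; [split; auto|reflexivity].
      intros n. destruct constructive_indefinite_description; simpl; auto.
    + intros [[z w] [[Cz Hw] E]]. cbn [fst snd] in *. subst x. exists (snd (g z)). split.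
      * apply (proj2 (HG (g z))); eauto.
      * intros eps Heps. destruct (arch_S (eps/3) ltac:(lra)) as [n Hn].
        destruct (Hw n) as [q [_ [_ [Hyq Hball]]]].
        exists (/INR (S (snd (w n)))). split; [apply inv_S_pos|].
        intros x' Hx'. destruct (Hball x' Hx') as [y' [Fy Hy]].
        exists y'; split; auto. pose proof (D4 (snd (g z)) q y'). lra.
Qed.
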